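(* Let $L\in K[D]$ with $\operatorname{Sym}_L=S_1\cdots S_k$ (homogeneous $S_i$), and let $b_1,\dots,b_k\in K$ with $b_1\cdots b_k=1$, so that also $\operatorname{Sym}_L=(b_1S_1)\cdots(b_kS_k)$. Then the rings of obstacles for the two types coincide: $$K[X]/(\operatorname{Sym}_L/S_1,\dots,\operatorname{Sym}_L/S_k)=K[X]/(\operatorname{Sym}_L/(b_1S_1),\dots,\operatorname{Sym}_L/(b_kS_k)).$$ Moreover, the obstacles coincide: the set of classes in this ring of the symbols of common obstacles to factorization of $L$ of type $(S_1)\cdots(S_k)$ equals the set of classes of the symbols of common obstacles to factorization of $L$ of type $(b_1S_1)\cdots(b_kS_k)$.
   Context: $K$ is a field with commuting derivations $\partial_1,\dots,\partial_n$, and $K[D]=K[D_1,\dots,D_n]$ is the ring of linear differential operators over $K$: the $D_i$ commute with each other and $D_i\circ a=aD_i+\partial_i(a)$ for $a\in K$. Every $L\in K[D]$ is uniquely $\sum_{|J|\le d}a_JD^J$ with $a_J\in K$ and $D^J=D_1^{j_1}\cdots D_n^{j_n}$. The order $\operatorname{ord}(L)$ is the largest $|J|$ with $a_J\ne0$, and $\operatorname{ord}(0)=-\infty$. The symbol $\operatorname{Sym}_L=\sum_{|J|=\operatorname{ord}L}a_JX^J\in K[X]=K[X_1,\dots,X_n]$, with $\operatorname{Sym}_0=0$. A factorization of type $(T_1)\cdots(T_k)$ of an operator $M$ is $M=F_1\circ\cdots\circ F_k$ with $\operatorname{Sym}_{F_i}=T_i$. A common obstacle to factorization of $L$ of type $(T_1)\cdots(T_k)$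 is an operator $R$ such that $L-R$ has a factorization of that type and $R$ has minimal possible order among such operators. The ring of obstacles for type $(T_1)\cdots(T_k)$, where $\operatorname{Sym}_L=T_1\cdots T_k$, is $K[X]/(\operatorname{Sym}_L/T_1,\dots,\operatorname{Sym}_L/T_k)$. The obstacle is the class in this ring of the symbols of common obstacles (these all lie in one class when the $T_i$ are pairwise coprime). *)

(* Defs.v *)
From HB Require Import structures.
From mathcomp Require Import all_boot all_order all_algebra.
From mathcomp Require Import mpoly.
Set Implicit Arguments. Unset Strict Implicit. Unset Printing Implicit Defensive.
Import GRing.Theory.
Local Open Scope ring_scope.

Section DiffOps.
Variables (K : fieldType) (n : nat).

Definition comm_derivations (der : 'I_n -> K -> K) : Prop :=
  (forall i a b, der i (a + b) = der i a + der i b) /\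
  (forall i a b, der i (a * b) = der i a * b + a * der i b) /\
  (forall i j a, der i (der j a) = der j (der i a)).

(** An operator [\sum_J a_J D^J] of K[D] is represented by the polynomial
    [\sum_J a_J 'X_[J]] of [{mpoly K[n]}] (coefficient of D^J = coefficient
    of the monomial J); addition and left K-scaling agree. The multiplication
    of K[D] is the composition [dcomp] below, NOT the polynomial product. *)
Definition Dop := {mpoly K[n]}.

Variable der : 'I_n -> K -> K.

(** D_i o Q, using D_i o a = a D_i + der_i a and commutativity of the D's. *)
Definition Di_comp (i : 'I_n) (Q : Dop) : Dop :=
  map_mpoly (der i) Q + 'X_i * Q.

Definition DJ_comp (m : 'X_{1..n}) (Q : Dop) : Dop :=
  foldr (fun i q => iter (m i) (Di_comp i) q) Q (enum 'I_n).

Definition dcomp (P Q : Dop) : Dop :=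
  \sum_(m <- msupp P) P@_m *: DJ_comp m Q.

(** Symbol: the top-order homogeneous part, as an element of K[X].
    (msize L = ord L + 1, and msize 0 = 0 so Sym_0 = 0.) *)
Definition Sym (L : Dop) : {mpoly K[n]} :=
  \sum_(m <- msupp L | mdeg m == (msize L).-1) L@_m *: 'X_[m].

Definition has_factorization k (M : Dop) (T : 'I_k -> {mpoly K[n]}) : Prop :=
  exists F : 'I_k -> Dop,
    (forall i, Sym (F i) = T i) /\ M = \big[dcomp/1]_(i < k) F i.

(** R is a common obstacle to factorization of L of type T: L - R factors
    with that type, and R has minimal order among such operators
    (orders compared through msize = ord + 1, with ord 0 = -oo). *)
Definition common_obstacle k (L : Dop) (T : 'I_k -> {mpoly K[n]}) (R : Dop) :=
  has_factorization (L - R) T /\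
  forall R', has_factorization (L - R') T -> (msize R <= msize R')%N.

End DiffOps.

(** Sym_L / T_i, for Sym_L = T_1 ... T_k, written as the symcofactor
    \prod_{j != i} T_j. *)
Definition symcofactor (K : fieldType) (n k : nat) (T : 'I_k -> {mpoly K[n]}) (i : 'I_k)
  : {mpoly K[n]} := \prod_(j < k | j != i) T j.

Definition in_ideal (K : fieldType) (n k : nat) (g : 'I_k -> {mpoly K[n]})
  (p : {mpoly K[n]}) : Prop :=
  exists c : 'I_k -> {mpoly K[n]}, p = \sum_(i < k) c i * g i.

(* Main.v *)
Require Import Defs.
From HB Require Import structures.
From mathcomp Require Import all_boot all_order all_algebra.
From mathcomp Require Import mpoly.
From mathcomp Require Import zify.
Import GRing.Theory.
Local Open Scope ring_scope.

Section Ops.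
Variables (K : fieldType) (n : nat) (der : 'I_n -> K -> K).
Hypothesis Hder : comm_derivations der.

Lemma derD i a b : der i (a + b) = der i a + der i b.
Proof. by case: Hder. Qed.
Lemma derM i a b : der i (a * b) = der i a * b + a * der i b.
Proof. by case: Hder => _ []. Qed.
Lemma derC i j a : der i (der j a) = der j (der i a).
Proof. by case: Hder => _ []. Qed.
Lemma der0 i : der i 0 = 0.
Proof. by apply/(addrI (der i 0)); rewrite -derD !addr0. Qed.
Lemma der_additive i : additive (der i).
Proof. move=> a b /=. apply: (addIr (der i b)). by rewrite -derD !subrK. Qed.

Definition derA i : {additive K -> K} :=
  HB.pack (der i) (GRing.isAdditive.Build K K (der i) (der_additive i)).

Lemma mcoeff_mapder i (P : {mpoly K[n]}) m : (map_mpoly (der i) P)@_m = der i P@_m.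
Proof. exact: (mcoeff_map_mpoly (derA i)). Qed.

Local Notation Di := (Di_comp der).
Local Notation DJ := (DJ_comp der).
Local Notation dc := (dcomp der).
Implicit Types (P Q X : {mpoly K[n]}).

Lemma der1 i : der i 1 = 0.
Proof.
have h := derM i 1 1; rewrite !mul1r mulr1 in h.
by apply: (addrI (der i 1)); rewrite addr0 -h.
Qed.

Lemma mapderD i P Q : map_mpoly (der i) (P + Q) = map_mpoly (der i) P + map_mpoly (der i) Q.
Proof. by apply/mpolyP=> m; rewrite mcoeffD !mcoeff_mapder mcoeffD derD. Qed.

Lemma mapderZ i c P : map_mpoly (der i) (c *: P) = der i c *: P + c *: map_mpoly (der i) P.
Proof. by apply/mpolyP=> m; rewrite mcoeffD !mcoeffZ !mcoeff_mapder mcoeffZ derM. Qed.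

Lemma mapderX i m : map_mpoly (der i) ('X_[m] : {mpoly K[n]}) = 0.
Proof.
apply/mpolyP=> k; rewrite mcoeff_mapder mcoeffX mcoeff0.
by case: (m == k); rewrite ?der1 ?der0.
Qed.

Lemma DiD i P Q : Di i (P + Q) = Di i P + Di i Q.
Proof. by rewrite /Di_comp mapderD mulrDr addrACA. Qed.

Lemma DiZ i c Q : Di i (c *: Q) = der i c *: Q + c *: Di i Q.
Proof. by rewrite /Di_comp mapderZ scalerDr -scalerAr addrA. Qed.

Lemma Di0 i : Di i 0 = 0.
Proof.
rewrite /Di_comp mulr0 addr0; apply/mpolyP=> m.
by rewrite mcoeff_mapder !mcoeff0 der0.
Qed.

Lemma Di_sum i (I : Type) (r : seq I) (p : pred I) (F : I -> {mpoly K[n]}) :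
  Di i (\sum_(x <- r | p x) F x) = \sum_(x <- r | p x) Di i (F x).
Proof. by apply: big_morph; [exact: DiD | exact: Di0]. Qed.

Lemma DiX i m : Di i 'X_[m] = 'X_[m + U_(i)].
Proof. by rewrite /Di_comp mapderX add0r mpolyXD mulrC. Qed.

Lemma DiXm i c m : Di i (c *: 'X_[m]) = der i c *: 'X_[m] + c *: 'X_[m + U_(i)].
Proof. by rewrite DiZ DiX. Qed.

Lemma DiC i j Q : Di i (Di j Q) = Di j (Di i Q).
Proof.
rewrite (mpolyE Q) !Di_sum; apply: eq_bigr => m _.
rewrite !DiXm !DiD !DiXm derC -!addrA; congr (_ + _).
rewrite addrCA; congr (_ + (_ + _ *: 'X_[_])).
by apply/mnmP=> k; rewrite !mnmDE addnAC.
Qed.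

Definition fld (s : seq 'I_n) (m : 'X_{1..n}) Q :=
  foldr (fun i q => iter (m i) (Di i) q) Q s.

Lemma DJE m Q : DJ m Q = fld (enum 'I_n) m Q.
Proof. by []. Qed.

Lemma iterD i k P Q : iter k (Di i) (P + Q) = iter k (Di i) P + iter k (Di i) Q.
Proof. by elim: k => //= k ->; rewrite DiD. Qed.

Lemma iter0 i k : iter k (Di i) 0 = 0.
Proof. by elim: k => //= k ->; rewrite Di0. Qed.

Lemma fldD s m P Q : fld s m (P + Q) = fld s m P + fld s m Q.
Proof. by elim: s => //= i s IH; rewrite IH iterD. Qed.

Lemma fld0 s m : fld s m 0 = 0.
Proof. by elim: s => //= i s IH; rewrite IH iter0. Qed.

Lemma iterC i j k Q : Di j (iter k (Di i) Q) = iter k (Di i) (Di j Q).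
Proof. by elim: k => //= k <-; rewrite DiC. Qed.

Lemma fldC j s m Q : Di j (fld s m Q) = fld s m (Di j Q).
Proof. by elim: s => //= i s <-; rewrite iterC. Qed.

Lemma eq_fld s (m1 m2 : 'X_{1..n}) Q : (forall j, j \in s -> m1 j = m2 j) -> fld s m1 Q = fld s m2 Q.
Proof.
elim: s => //= i s IH H; rewrite IH ?H ?mem_head // => j js.
by apply: H; rewrite in_cons js orbT.
Qed.

Lemma fld_addU s m i Q : uniq s -> i \in s -> fld s (m + U_(i)) Q = Di i (fld s m Q).
Proof.
elim: s => //= j s IH /andP [js us]; rewrite in_cons; case: (eqVneq i j) => [-> _ | ij /= iS].
  rewrite mnmDE mnm1E eqxx addn1 /=; congr (Di j (iter _ _ _)).
  apply: eq_fld => k ks; rewrite mnmDE mnm1E.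
  case: (eqVneq j k) => [jk|]; last by rewrite addn0.
  by rewrite jk ks in js.
rewrite mnmDE mnm1E (negbTE ij) addn0 IH // iterC //.
Qed.

Lemma fld_zero s Q : fld s 0%MM Q = Q.
Proof. by elim: s => //= i s ->; rewrite mnm0E. Qed.

Lemma DJ_addU m i Q : DJ (m + U_(i)) Q = Di i (DJ m Q).
Proof. by rewrite !DJE fld_addU ?enum_uniq ?mem_enum. Qed.

Lemma DJ0 Q : DJ 0%MM Q = Q.
Proof. exact: fld_zero. Qed.

Lemma DJD m P Q : DJ m (P + Q) = DJ m P + DJ m Q.
Proof. exact: fldD. Qed.

Lemma dc_sub P X (s : seq 'X_{1..n}) : uniq s -> {subset msupp P <= s} ->
  dc P X = \sum_(m <- s) P@_m *: DJ m X.
Proof.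
move=> us sub; rewrite /dcomp.
have hp : perm_eq ([seq x <- s | mem (msupp P) x] ++ [seq x <- s | predC (mem (msupp P)) x]) s.
  by apply/permPl; exact: perm_filterC.
rewrite -(perm_big _ hp) big_cat /=.
rewrite [X in _ + X]big1_seq ?addr0; last first.
  move=> m; rewrite mem_filter /= => /andP [mP _].
  by rewrite memN_msupp_eq0 ?scale0r.
apply: perm_big; apply: uniq_perm; rewrite ?msupp_uniq ?filter_uniq //.
by move=> m; rewrite mem_filter /=; case mP: (m \in msupp P); rewrite // sub.
Qed.

Lemma dcD P Q X : dc (P + Q) X = dc P X + dc Q X.
Proof.
pose s := undup (msupp P ++ msupp Q).
have us : uniq s by rewrite undup_uniq.
rewrite !(@dc_sub _ _ s) //; first last.
- by move=> m /msuppD_le; rewrite mem_undup.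
- by move=> m mP; rewrite mem_undup mem_cat mP.
- by move=> m mP; rewrite mem_undup mem_cat mP orbT.
by rewrite -big_split /=; apply: eq_bigr => m _; rewrite mcoeffD scalerDl.
Qed.

Lemma dcZ c P X : dc (c *: P) X = c *: dc P X.
Proof.
rewrite (@dc_sub _ _ (msupp P)) ?msupp_uniq //; last exact: msuppZ_le.
rewrite /dcomp scaler_sumr; apply: eq_bigr => m _; by rewrite mcoeffZ scalerA.
Qed.

Lemma dc0 X : dc 0 X = 0.
Proof. by rewrite -{1}(scale0r (0 : {mpoly K[n]})) dcZ scale0r. Qed.

Lemma dc_sum X (I : Type) (r : seq I) (p : pred I) (F : I -> {mpoly K[n]}) :
  dc (\sum_(x <- r | p x) F x) X = \sum_(x <- r | p x) dc (F x) X.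
Proof. exact: (big_morph (fun P => dc P X) (fun P Q => dcD P Q X) (dc0 X)). Qed.

Lemma dcX m X : dc 'X_[m] X = DJ m X.
Proof. by rewrite /dcomp msuppX big_seq1 mcoeffX eqxx scale1r. Qed.

Lemma K1 i Q X : Di i (dc Q X) = dc (Di i Q) X.
Proof.
rewrite [in RHS](mpolyE Q) [in RHS]Di_sum dc_sum {1}/dcomp Di_sum.
apply: eq_bigr => m _; rewrite DiZ DiXm dcD !dcZ !dcX DJ_addU //.
Qed.

Lemma K2 m Q X : DJ m (dc Q X) = dc (DJ m Q) X.
Proof.
rewrite !DJE; elim: (enum 'I_n) => //= i s ->.
by elim: (m i) => //= k ->; rewrite K1.
Qed.

Lemma dc_assoc P Q X : dc (dc P Q) X = dc P (dc Q X).
Proof.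
rewrite [dc P Q]/dcomp dc_sum [in RHS]/dcomp; apply: eq_bigr => m _.
by rewrite dcZ -K2.
Qed.

Lemma dcC c X : dc c%:MP X = c *: X.
Proof. by rewrite -alg_mpolyC -mpolyX0 dcZ dcX DJ0. Qed.

Definition low (d : nat) (E : {mpoly K[n]}) := forall m, (d <= mdeg m)%N -> E@_m = 0.

Lemma low0 d : low d 0.
Proof. by move=> m _; rewrite mcoeff0. Qed.

Lemma lowD d P Q : low d P -> low d Q -> low d (P + Q).
Proof. by move=> hP hQ m hm; rewrite mcoeffD hP ?hQ ?addr0. Qed.

Lemma lowZ d c P : low d P -> low d (c *: P).
Proof. by move=> hP m hm; rewrite mcoeffZ hP ?mulr0. Qed.

Lemma low_mono d d' P : (d <= d')%N -> low d P -> low d' P.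
Proof. by move=> dd hP m hm; apply: hP; apply: leq_trans hm. Qed.

Lemma low_sum (d : nat) (I : eqType) (r : seq I) (p : pred I) (F : I -> {mpoly K[n]}) :
  (forall x, x \in r -> p x -> low d (F x)) -> low d (\sum_(x <- r | p x) F x).
Proof.
move=> H; rewrite big_seq_cond; elim/big_rec: _ => [|x y /andP [xr px] hy].
  exact: low0.
by apply: lowD => //; apply: H.
Qed.

Lemma lowX d m : (mdeg m < d)%N -> low d 'X_[m].
Proof.
move=> hm k hk; rewrite mcoeffX; case: (eqVneq m k) => [mk|//].
by move: hm; rewrite mk ltnNge hk.
Qed.

Lemma low_mulX d i E : low d E -> low d.+1 ('X_i * E).
Proof.
move=> hE; rewrite (mpolyE E) mulr_sumr; apply: low_sum => m mE _.
rewrite -scalerAr mulrC -mpolyXD; case: (leqP d (mdeg m)) => hm.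
  by rewrite hE // scale0r; apply: low0.
by apply: lowZ; apply: lowX; rewrite mdegD mdeg1 addn1.
Qed.

Lemma low_map d i E : low d E -> low d (map_mpoly (der i) E).
Proof. by move=> hE m hm; rewrite mcoeff_mapder hE ?der0. Qed.

Lemma low_Di d i E : low d E -> low d.+1 (Di i E).
Proof.
move=> hE; apply: lowD; last exact: low_mulX.
by move=> m hm; rewrite mcoeff_mapder hE ?der0 // ltnW.
Qed.

Lemma DJ_C c m : exists2 E, DJ m c%:MP = c *: 'X_[m] + E & low (mdeg m) E.
Proof.
move: {2}(mdeg m) (erefl (mdeg m)) => k; elim: k m => [|k IH] m hm.
  have -> : m = 0%MM by apply/eqP; rewrite -mdeg_eq0 hm.
  exists 0; last exact: low0.
  by rewrite DJ0 addr0 -alg_mpolyC -mpolyX0.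
case: (pickP (fun i => 0 < m i)%N) => [i /= mi | none]; last first.
  have m0 : m = 0%MM.
    apply/mnmP=> j; rewrite mnm0E; have := none j; rewrite /= lt0n => /negbT.
    by rewrite negbK => /eqP.
  by rewrite m0 mdeg0 in hm.
have lem : (U_(i) <= m)%MM by apply/mnm_lepP=> j; rewrite mnm1E; case: eqP => // <-.
have em : m = ((m - U_(i)) + U_(i))%MM by rewrite submK.
have hd : mdeg (m - U_(i)) = k by move: hm; rewrite {1}em mdegD mdeg1 addn1 => -[].
have [E hE lE] := IH _ hd.
exists (der i c *: 'X_[m - U_(i)] + Di i E).
  by rewrite {1}em DJ_addU hE DiD DiXm -em (addrC (der i c *: _)) -!addrA.
rewrite hm; apply: lowD; last by rewrite -hd; exact: low_Di.
by apply: lowZ; apply: lowX; rewrite hd.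
Qed.

Lemma SymE P m : (Sym P)@_m = if mdeg m == (msize P).-1 then P@_m else 0.
Proof.
rewrite /Sym raddf_sum /= big_mkcond /=.
case: (boolP (m \in msupp P)) => mP.
  rewrite (bigD1_seq m) ?msupp_uniq //= big1 ?addr0.
    by case: ifP => _; rewrite ?mcoeffZ ?mcoeffX ?eqxx ?mulr1.
  by move=> j /negbTE jm; case: ifP => _; rewrite ?mcoeffZ ?mcoeffX ?jm ?mulr0.
rewrite big1_seq; first by case: ifP; rewrite ?memN_msupp_eq0.
move=> j /andP [_ jP]; case: ifP => _ //; rewrite mcoeffZ mcoeffX.
case: (eqVneq j m) => [jm|_]; last by rewrite mulr0.
by move: mP; rewrite -jm jP.
Qed.

Lemma Sym_low (F G : {mpoly K[n]}) c : c != 0 ->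
  (forall m, ((msize F).-1 <= mdeg m)%N -> G@_m = c * F@_m) -> Sym G = c *: Sym F.
Proof.
move=> c0 H.
case: (eqVneq F 0) => [F0|F0].
  have G0 : G = 0.
    by apply/mpolyP=> m; rewrite H F0 ?msize0 // !mcoeff0 ?mulr0.
  by apply/mpolyP=> m; rewrite mcoeffZ !SymE F0 G0 !mcoeff0; case: ifP; rewrite ?mulr0.
have hF := mlead_deg F0.
have sz : msize G = msize F.
  apply/eqP; rewrite eqn_leq; apply/andP; split.
    rewrite leqNgt; apply/negP => lt.
    have G0 : G != 0 by apply/eqP => G0; rewrite G0 msize0 in lt.
    have := mlead_supp G0; rewrite mcoeff_msupp H; last first.
      by have e := mlead_deg G0; lia.
    rewrite memN_msupp_eq0 ?mulr0 ?eqxx //; apply: msize_mdeg_ge.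
    by rewrite -ltnS (mlead_deg G0).
  rewrite -hF; apply: msize_mdeg_lt; rewrite mcoeff_msupp H -?hF //.
  by rewrite mulf_neq0 // mleadc_eq0.
apply/mpolyP=> m; rewrite mcoeffZ !SymE sz; case: ifP => [/eqP e|_]; last by rewrite mulr0.
by rewrite H // e.
Qed.

Lemma Sym_Z c (F : {mpoly K[n]}) : c != 0 -> Sym (c *: F) = c *: Sym F.
Proof. by move=> c0; apply: Sym_low => // m _; rewrite mcoeffZ. Qed.

Lemma Sym_dcC c (F : {mpoly K[n]}) : c != 0 -> Sym (dc F c%:MP) = c *: Sym F.
Proof.
move=> c0; apply: Sym_low => // m hm.
suff : low (msize F).-1 (dc F c%:MP - c *: F).
  by move/(_ m hm)/eqP; rewrite mcoeffB mcoeffZ subr_eq0 => /eqP.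
rewrite /dcomp [X in c *: X](mpolyE F) scaler_sumr -sumrB; apply: low_sum => m' m'F _.
have [E hE lE] := DJ_C c m'.
rewrite hE scalerDr scalerA mulrC -scalerA addrC addKr; apply: lowZ.
apply: low_mono lE; rewrite -ltnS prednK; first exact: msize_mdeg_lt.
by apply: leq_ltn_trans (msize_mdeg_lt m'F).
Qed.

Lemma prod_neq0 (I : Type) (r : seq I) (p : pred I) (f : I -> K) :
  (forall x, f x != 0) -> \prod_(x <- r | p x) f x != 0.
Proof.
move=> H; elim/big_ind: _ => //; first exact: oner_neq0.
by move=> x y; exact: mulf_neq0.
Qed.

Lemma fact_scale k M (T : 'I_k -> {mpoly K[n]}) (b : 'I_k -> K) :
  (forall i, b i != 0) -> \prod_(i < k) b i = 1 ->
  has_factorization der M T -> has_factorization der M (fun i => b i *: T i).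
Proof.
move=> bnz prod1 [F [SF ->]].
pose Fn j := odflt 0 (omap F (insub j)).
pose bn j := odflt 1 (omap b (insub j)).
have bnnz j : bn j != 0 by rewrite /bn; case: (insub j) => [i|] /=; rewrite ?oner_neq0.
pose w i := \prod_(i <= j < k) bn j.
have wnz i : w i != 0 by apply: prod_neq0.
pose Gn j := w j *: dc (Fn j) ((w j.+1)^-1)%:MP.
have FnE (i : 'I_k) : Fn i = F i by rewrite /Fn valK.
have bnE (i : 'I_k) : bn i = b i by rewrite /bn valK.
have key d i : (i + d = k)%N ->
    \big[dc/1]_(i <= j < k) Gn j = w i *: \big[dc/1]_(i <= j < k) Fn j.
  elim: d i => [|d IH] i hi.
    have ki : (k <= i)%N by rewrite -hi addn0.
    by rewrite /w !(big_geq ki) scale1r.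
  have ik : (i < k)%N by rewrite -hi addnS ltnS leq_addr.
  rewrite !(big_ltn ik).
  rewrite IH; last by rewrite addSnnS.
  by rewrite /Gn dcZ dc_assoc dcC scalerA mulVf ?scale1r.
have wS (i : 'I_k) : w i = b i * w i.+1.
  by rewrite {1}/w (big_ltn (ltn_ord i)) bnE.
exists (fun i : 'I_k => Gn i); split.
  move=> i; rewrite /Gn Sym_Z // Sym_dcC ?invr_neq0 // FnE SF scalerA.
  by rewrite wS mulrK // unitfE.
have := key k 0%N (add0n k).
have -> : w 0%N = 1.
  rewrite /w big_mkord -[RHS]prod1; apply: eq_bigr => i _; exact: bnE.
rewrite scale1r big_mkord => ->; rewrite big_mkord.
by apply: eq_bigr => i _; rewrite FnE.
Qed.
End Ops.

Lemma fact_equiv (K : fieldType) (n : nat) (der : 'I_n -> K -> K)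
  (Hder : comm_derivations der) k (M : Dop K n) (S : 'I_k -> {mpoly K[n]}) (b : 'I_k -> K) :
  \prod_(i < k) b i = 1 ->
  has_factorization der M S <-> has_factorization der M (fun i => b i *: S i).
Proof.
move=> prod1.
have bnz i : b i != 0.
  apply/eqP => b0; move: prod1; rewrite (bigD1 i) //= b0 mul0r => /eqP.
  by rewrite eq_sym oner_eq0.
split; first exact: fact_scale.
move=> H; have := @fact_scale _ _ _ Hder _ _ _ (fun i => (b i)^-1) _ _ H.
case; first by move=> i; rewrite invr_neq0.
  by rewrite prodfV prod1 invr1.
move=> F [SF ->]; exists F; split => // i.
by rewrite SF scalerA mulVf ?scale1r.
Qed.

Theorem mainTheorem7 (K : fieldType) (n : nat) (der : 'I_n -> K -> K)
  (Hder : comm_derivations der)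
  (k : nat) (L : Dop K n) (S : 'I_k -> {mpoly K[n]}) (b : 'I_k -> K) :
  (forall i, S i \is homog mdeg) ->
  Sym L = \prod_(i < k) S i ->
  \prod_(i < k) b i = 1 ->
  (* the two ideals, hence the two rings of obstacles, coincide *)
  (forall p, in_ideal (symcofactor S) p <->
             in_ideal (symcofactor (fun i => b i *: S i)) p) /\
  (* the sets of classes of symbols of common obstacles coincide *)
  (forall R, common_obstacle der L S R ->
     exists R', common_obstacle der L (fun i => b i *: S i) R' /\
                in_ideal (symcofactor S) (Sym R - Sym R')) /\
  (forall R', common_obstacle der L (fun i => b i *: S i) R' ->
     exists R, common_obstacle der L S R /\
                in_ideal (symcofactor S) (Sym R - Sym R')).
Proof.
move=> _ _ prod1.
have bnz i : b i != 0.
  apply/eqP => b0; move: prod1; rewrite (bigD1 i) //= b0 mul0r => /eqP.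
  by rewrite eq_sym oner_eq0.
have FE M := @fact_equiv _ _ _ Hder _ M S _ prod1.
have zero_in (R : Dop K n) : in_ideal (symcofactor S) (Sym R - Sym R).
  by exists (fun _ => 0); rewrite subrr big1 // => i _; rewrite mul0r.
have COE R : common_obstacle der L S R <-> common_obstacle der L (fun i => b i *: S i) R.
  rewrite /common_obstacle; split => -[h1 h2]; split.
  - by apply/FE.
  - by move=> R' /FE; apply: h2.
  - by apply/FE.
  - by move=> R' /FE; apply: h2.
split; last split.
- pose be i := \prod_(j < k | j != i) b j.
  have benz i : be i != 0 by apply: prod_neq0.
  have scE i : symcofactor (fun i => b i *: S i) i = be i *: symcofactor S i.
    by rewrite /symcofactor scaler_prod.
  move=> p; split => -[c ->].
    exists (fun i => (be i)^-1 *: c i); apply: eq_bigr => i _.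
    by rewrite scE -scalerAl -scalerAr scalerA mulVf ?scale1r.
  exists (fun i => be i *: c i); apply: eq_bigr => i _.
  by rewrite scE -scalerAl -scalerAr.
- by move=> R hR; exists R; split; [apply/COE | apply: zero_in].
- by move=> R hR; exists R; split; [apply/COE | apply: zero_in].
Qed.
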